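(* For every integer $n\ge1$, $$\exp\!\left(\pi\sqrt{\tfrac{2n}{3}}\left(\sqrt{1-\tfrac{1}{24n}}-1\right)\right)=\sum_{t=0}^\infty e_1(t)\,n^{-t}+\sum_{t=0}^\infty o_1(t)\,n^{-(2t+1)/2},$$ where $e_1(0)=1$, $$e_1(t)=\frac{(-1)^t}{24^t}\frac{(1/2-t)_{t+1}}{t}\sum_{u=1}^t\frac{(-1)^u(-t)_u}{(t+u)!\,(2u-1)!}\left(\frac{\pi^2}{36}\right)^u\quad(t\ge1),$$ $$o_1(t)=-\frac{\pi}{12\sqrt6}\cdot\frac{(-1)^t(1/2-t)_{t+1}}{24^t}\sum_{u=0}^t\frac{(-1)^u(-t)_u}{(t+u+1)!\,(2u)!}\left(\frac{\pi^2}{36}\right)^u\quad(t\ge0).$$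
   Context: $(a)_m=a(a+1)\cdots(a+m-1)$ denotes the rising factorial (Pochhammer symbol), with $(a)_0=1$. *)

(* Defs.v *)
From Stdlib Require Import Reals Lra.
From Coquelicot Require Import Coquelicot.
Open Scope R_scope.

Fixpoint poch (a : R) (m : nat) : R :=
  match m with
  | O => 1
  | S k => poch a k * (a + INR k)
  end.

Fixpoint sumR (f : nat -> R) (n : nat) : R :=
  match n with
  | O => 0
  | S k => sumR f k + f k
  end.

Definition e1 (t : nat) : R :=
  match t with
  | O => 1
  | S _ =>
    (-1) ^ t / 24 ^ t * poch (1/2 - INR t) (t + 1) / INR t *
    sumR (fun k => let u := (k + 1)%nat in
            (-1) ^ u * poch (- INR t) u
            / (INR (Factorial.fact (t + u)) * INR (Factorial.fact (2 * u - 1)))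
            * (PI ^ 2 / 36) ^ u) t
  end.

Definition o1 (t : nat) : R :=
  - (PI / (12 * sqrt 6)) *
  ((-1) ^ t * poch (1/2 - INR t) (t + 1) / 24 ^ t) *
  sumR (fun u =>
          (-1) ^ u * poch (- INR t) u
          / (INR (Factorial.fact (t + u + 1)) * INR (Factorial.fact (2 * u)))
          * (PI ^ 2 / 36) ^ u) (t + 1).

(* Main.v *)
Require Import Defs.
From Stdlib Require Import Reals.
From Coquelicot Require Import Coquelicot.
From Stdlib Require Import Lra Lia.
Open Scope R_scope.

Lemma sum_n_sumR (a : nat -> R) n : sum_n a n = sumR a (S n).
Proof.
  induction n as [|n IH].
  - rewrite sum_O. simpl. ring.
  - rewrite sum_Sn, IH. simpl. unfold plus; simpl. ring.
Qed.

Lemma is_series_sumR (a : nat -> R) l :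
  is_series a l <-> is_lim_seq (fun K => sumR a K) l.
Proof.
  rewrite (is_lim_seq_incr_1 (fun K => sumR a K)).
  split; intro H.
  - apply is_lim_seq_ext with (u := sum_n a).
    + intro; apply sum_n_sumR.
    + exact H.
  - assert (H' : is_lim_seq (sum_n a) l).
    { apply is_lim_seq_ext with (u := fun K => sumR a (S K)).
      + intro; symmetry; apply sum_n_sumR.
      + exact H. }
    exact H'.
Qed.

Lemma sumR_abs (c : nat -> R) K : Rabs (sumR c K) <= sumR (fun n => Rabs (c n)) K.
Proof.
  induction K; simpl.
  - rewrite Rabs_R0; lra.
  - eapply Rle_trans; [apply Rabs_triang|]. lra.
Qed.

Lemma sumR_le (c d : nat -> R) K : (forall n, c n <= d n) -> sumR c K <= sumR d K.
Proof. intro H; induction K; simpl; [lra| specialize (H K); lra]. Qed.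

Lemma abs_series_bound (c d : nat -> R) L D :
  is_series c L -> (forall n, Rabs (c n) <= d n) -> is_series d D -> Rabs L <= D.
Proof.
  intros Hc Hcd Hd.
  rewrite is_series_sumR in Hc, Hd.
  apply is_lim_seq_abs in Hc.
  assert (H := is_lim_seq_le _ _ _ _ (fun K => Rle_trans _ _ _ (sumR_abs c K) (sumR_le _ _ K Hcd)) Hc Hd).
  exact H.
Qed.

Lemma sumR_shift (a : nat -> R) K M :
  sumR (fun k => a (K + k)%nat) M = sumR a (M + K) - sumR a K.
Proof.
  induction M; simpl.
  - ring.
  - rewrite IHM. replace (K + M)%nat with (M + K)%nat by lia. ring.
Qed.

Lemma is_series_tail (a : nat -> R) l K :
  is_series a l -> is_series (fun k => a (K + k)%nat) (l - sumR a K).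
Proof.
  rewrite !is_series_sumR. intro H.
  apply is_lim_seq_ext with (u := fun M => sumR a (M + K) - sumR a K).
  - intro; symmetry; apply sumR_shift.
  - apply (is_lim_seq_minus' _ (fun _ => sumR a K)).
    + apply (is_lim_seq_incr_n (fun M => sumR a M) K). exact H.
    + apply is_lim_seq_const.
Qed.

Lemma is_series_geom_tail x K : 0 <= x < 1 ->
  is_series (fun k => x ^ (K + k)) (x ^ K / (1 - x)).
Proof.
  intro Hx.
  replace (x ^ K / (1 - x)) with (/ (1 - x) * x ^ K) by (unfold Rdiv; ring).
  apply is_series_ext with (a := fun k => x ^ k * x ^ K).
  - intro k. change (x ^ k * x ^ K = x ^ (K + k)). rewrite pow_add. ring.
  - apply is_series_scal_r. apply is_series_geom.
    rewrite Rabs_right; lra.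
Qed.

Lemma tail_bound (a : nat -> R) l x K : 0 <= x < 1 ->
  is_series a l -> (forall n, Rabs (a n) <= x ^ n) ->
  Rabs (l - sumR a K) <= x ^ K / (1 - x).
Proof.
  intros Hx Ha Hb.
  eapply abs_series_bound.
  - apply is_series_tail; exact Ha.
  - intro n; apply Hb.
  - apply is_series_geom_tail; exact Hx.
Qed.

Lemma sumR_pow_le y K : 0 <= y < 1 -> sumR (fun n => y ^ n) K <= / (1 - y).
Proof.
  intro Hy.
  assert (E : forall K, sumR (fun n => y ^ n) K * (1 - y) = 1 - y ^ K).
  { induction K0; simpl; [ring|]. rewrite Rmult_plus_distr_r, IHK0. ring. }
  apply Rmult_le_reg_r with (1 - y); [lra|].
  rewrite E, Rinv_l; [|lra]. assert (0 <= y ^ K) by (apply pow_le; lra). lra.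
Qed.

Lemma Kpow_le y K : 0 <= y <= 1 -> INR K * y ^ K <= sumR (fun n => y ^ n) K.
Proof.
  intro Hy. induction K.
  - simpl; lra.
  - rewrite S_INR. simpl.
    assert (0 <= y ^ K) by (apply pow_le; lra).
    assert (INR K * (y * y ^ K) <= INR K * y ^ K).
    { apply Rmult_le_compat_l; [apply pos_INR|]. nra. }
    nra.
Qed.

Lemma lim_Kx x : 0 <= x < 1 -> is_lim_seq (fun K => INR K * x ^ K) 0.
Proof.
  intro Hx. set (y := sqrt x).
  assert (Hy : 0 <= y < 1).
  { split; [apply sqrt_pos|]. unfold y. rewrite <- sqrt_1. apply sqrt_lt_1; lra. }
  assert (Hxy : x = y * y) by (unfold y; rewrite sqrt_sqrt; lra).
  apply is_lim_seq_le_le with (u := fun _ => 0) (w := fun K => y ^ K * / (1 - y)).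
  - intro K. split.
    + apply Rmult_le_pos; [apply pos_INR| apply pow_le; lra].
    + rewrite Hxy, Rpow_mult_distr.
      assert (0 <= y ^ K) by (apply pow_le; lra).
      assert (H1 := Kpow_le y K ltac:(lra)).
      assert (H2 := sumR_pow_le y K Hy).
      replace (INR K * (y ^ K * y ^ K)) with (y ^ K * (INR K * y ^ K)) by ring.
      apply Rmult_le_compat_l; lra.
  - apply is_lim_seq_const.
  - replace (Finite 0) with (Rbar_mult 0 (/ (1 - y))) by (simpl; f_equal; ring).
    apply is_lim_seq_scal_r. apply is_lim_seq_geom. rewrite Rabs_right; lra.
Qed.

Lemma sumR_ext (f g : nat -> R) K : (forall k, (k < K)%nat -> f k = g k) -> sumR f K = sumR g K.
Proof. intro H; induction K; simpl; [reflexivity|]. rewrite IHK by (intros; apply H; lia). rewrite H by lia. reflexivity. Qed.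

Lemma sumR_minus (f g : nat -> R) K : sumR (fun k => f k - g k) K = sumR f K - sumR g K.
Proof. induction K; simpl; [ring|]. rewrite IHK; ring. Qed.

Lemma sumR_plus (f g : nat -> R) K : sumR (fun k => f k + g k) K = sumR f K + sumR g K.
Proof. induction K; simpl; [ring|]. rewrite IHK; ring. Qed.

Lemma sumR_scal (c : R) (f : nat -> R) K : sumR (fun k => c * f k) K = c * sumR f K.
Proof. induction K; simpl; [ring|]. rewrite IHK; ring. Qed.

Lemma sumR_const (c : R) K : sumR (fun _ => c) K = INR K * c.
Proof. induction K; simpl sumR; [simpl; ring|]. rewrite IHK, S_INR; ring. Qed.

Lemma sumR_swap (f : nat -> nat -> R) K K' :
  sumR (fun N => sumR (fun m => f m N) K) K' = sumR (fun m => sumR (f m) K') K.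
Proof.
  induction K'; simpl.
  - clear. induction K; simpl; [ring|]. rewrite <- IHK; ring.
  - rewrite IHK', <- sumR_plus. reflexivity.
Qed.

Lemma sumR_extend_zero (g : nat -> R) N K :
  (forall m, (N < m)%nat -> g m = 0) -> (N < K)%nat -> sumR g (S N) = sumR g K.
Proof.
  intros Hg HK. induction K; [lia|].
  destruct (Nat.eq_dec K N) as [->|Hne]; [reflexivity|].
  simpl. rewrite <- IHK by lia. rewrite (Hg K) by lia. simpl; ring.
Qed.

Lemma fubini_tri (f : nat -> nat -> R) x (F : nat -> R) L :
  0 <= x < 1 -> (forall m N, (N < m)%nat -> f m N = 0) ->
  (forall m N, Rabs (f m N) <= x ^ N) ->
  (forall m, is_series (f m) (F m)) -> is_series F L ->
  is_series (fun N => sumR (fun m => f m N) (S N)) L.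
Proof.
  intros Hx Hz Hb HF HL.
  apply is_series_sumR. apply is_series_sumR in HL.
  apply is_lim_seq_ext with
    (u := fun K => sumR F K - sumR (fun m => F m - sumR (f m) K) K).
  - intro K. rewrite sumR_minus.
    rewrite <- (sumR_swap f K K).
    rewrite (sumR_ext (fun N => sumR (fun m => f m N) (S N)) (fun N => sumR (fun m => f m N) K)).
    + ring.
    + intros N HN. apply sumR_extend_zero; [|exact HN]. intros; apply Hz; lia.
  - replace L with (L - 0) by ring.
    apply (is_lim_seq_minus' _ _ L 0); [exact HL|].
    apply is_lim_seq_le_le with (u := fun K => - (INR K * x ^ K * / (1 - x)))
                                (w := fun K => INR K * x ^ K * / (1 - x)).
    + intro K. apply Rabs_le_between.
      eapply Rle_trans; [apply sumR_abs|].
      eapply Rle_trans.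
      * apply (sumR_le _ (fun _ => x ^ K / (1 - x))).
        intro m. apply (tail_bound (f m) (F m) x K Hx (HF m)). intro; apply Hb.
      * rewrite sumR_const. unfold Rdiv. lra.
    + assert (H0 := is_lim_seq_mult' _ (fun _ => / (1 - x)) 0 (/ (1 - x)) (lim_Kx x Hx) (is_lim_seq_const _)).
      rewrite Rmult_0_l in H0.
      apply is_lim_seq_opp in H0. simpl in H0. rewrite Ropp_0 in H0. exact H0.
    + assert (H0 := is_lim_seq_mult' _ (fun _ => / (1 - x)) 0 (/ (1 - x)) (lim_Kx x Hx) (is_lim_seq_const _)).
      rewrite Rmult_0_l in H0. exact H0.
Qed.

Lemma sumR_pairs (y : nat -> R) K :
  sumR (fun t => y (2 * t)%nat + y (2 * t + 1)%nat) K = sumR y (2 * K).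
Proof.
  induction K; [reflexivity|].
  replace (2 * S K)%nat with (S (S (2 * K))) by lia.
  cbn [sumR]. rewrite IHK. replace (2 * K + 1)%nat with (S (2 * K)) by lia. ring.
Qed.

Lemma even_odd_split (y : nat -> R) (x C L : R) :
  0 <= x < 1 -> 0 <= C -> (forall N, Rabs (y N) <= C * x ^ N) -> is_series y L ->
  exists A B, is_series (fun t => y (2 * t)%nat) A /\
              is_series (fun t => y (2 * t + 1)%nat) B /\ L = A + B.
Proof.
  intros Hx HC Hb HL.
  assert (HA : ex_series (fun t => y (2 * t)%nat)).
  { apply (@ex_series_le R_AbsRing R_CompleteNormedModule) with (b := fun t => C * (x ^ 2) ^ t).
    - intro t. change (norm (y (2 * t)%nat)) with (Rabs (y (2 * t)%nat)).
      rewrite <- pow_mult. apply Hb.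
    - exists (/ (1 - x ^ 2) * C). apply is_series_ext with (a := fun t => (x ^ 2) ^ t * C).
      + intro; apply Rmult_comm.
      + apply is_series_scal_r. apply is_series_geom.
        rewrite Rabs_right by (apply Rle_ge, pow_le; lra).
        simpl. nra. }
  destruct HA as [A HA].
  assert (HP : is_series (fun t => y (2 * t)%nat + y (2 * t + 1)%nat) L).
  { apply is_series_sumR. apply is_series_sumR in HL.
    apply is_lim_seq_ext with (u := fun K => sumR y (2 * K)).
    - intro; symmetry; apply sumR_pairs.
    - apply (is_lim_seq_subseq (fun K => sumR y K) L (fun K => 2 * K)%nat); [|exact HL].
      apply eventually_subseq. intro; lia. }
  exists A, (L - A). split; [exact HA|]. split; [|ring].
  assert (H := is_series_minus _ _ _ _ HP HA).
  apply is_series_ext with (a := fun n => plus (y (2 * n)%nat + y (2 * n + 1)%nat) (opp (y (2 * n)%nat))).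
  - intro; unfold plus, opp; simpl. change (y (2 * n)%nat + y (2 * n + 1)%nat + - y (2 * n)%nat = y (2 * n + 1)%nat). ring.
  - exact H.
Qed.

Fixpoint b (N m : nat) : R :=
  match N with
  | O => match m with O => 1 | _ => 0 end
  | S N' => match m with O => 0 | S m' => b N' m' + b N' (S (S m')) end
  end.

Lemma b_bounds N : forall m, 0 <= b N m <= 2 ^ N.
Proof.
  induction N; intro m; destruct m as [|m]; simpl; try lra; pose proof (pow_le 2 N ltac:(lra)); try lra.
  specialize (IHN m) as H1. specialize (IHN (S (S m))) as H2. lra.
Qed.

Lemma b_zero_gt N : forall m, (N < m)%nat -> b N m = 0.
Proof.
  induction N; intros m Hm; destruct m as [|m]; simpl; try lia; try reflexivity.
  rewrite !IHN by lia. ring.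
Qed.

Lemma b_zero_parity N : forall m, Nat.even (N + m) = false -> b N m = 0.
Proof.
  induction N; intros m Hm; destruct m as [|m]; simpl in *; try discriminate; try reflexivity.
  rewrite (IHN m), (IHN (S (S m))); [ring| |].
  - replace (N + S (S m))%nat with (S (S (N + m))) by lia. simpl.
    replace (N + S m)%nat with (S (N + m)) in Hm by lia. exact Hm.
  - replace (N + S m)%nat with (S (N + m)) in Hm by lia. exact Hm.
Qed.

Lemma b_term_bound h N m : 0 <= h -> Rabs (b N m * h ^ N) <= (2 * h) ^ N.
Proof.
  intro Hh. destruct (b_bounds N m).
  rewrite Rabs_right.
  - rewrite Rpow_mult_distr. apply Rmult_le_compat_r; [apply pow_le|]; lra.
  - apply Rle_ge, Rmult_le_pos; [lra| apply pow_le; lra].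
Qed.

Lemma b_series_ex h m : 0 <= h < 1/2 -> ex_series (fun N => b N m * h ^ N).
Proof.
  intro Hh.
  apply (@ex_series_le R_AbsRing R_CompleteNormedModule) with (b := fun N => (2 * h) ^ N).
  - intro N. apply (b_term_bound h N m). lra.
  - apply ex_series_geom. rewrite Rabs_right; lra.
Qed.

Lemma Series_zero : Series (fun _ => 0) = 0.
Proof.
  apply is_series_unique. apply is_series_sumR.
  apply is_lim_seq_ext with (u := fun _ => 0).
  - intro K. rewrite sumR_const. ring.
  - apply is_lim_seq_const.
Qed.

Definition Pm (h : R) (m : nat) : R := Series (fun N => b N m * h ^ N).

Lemma Pm_0 h : 0 <= h < 1/2 -> Pm h 0 = 1.
Proof.
  intro Hh. unfold Pm. rewrite Series_incr_1 by (apply b_series_ex; exact Hh).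
  simpl. rewrite Series_ext with (b := fun _ => 0).
  - rewrite Series_zero. ring.
  - intro; ring.
Qed.

Lemma Pm_rec h m : 0 <= h < 1/2 -> Pm h (S m) = h * (Pm h m + Pm h (S (S m))).
Proof.
  intro Hh. unfold Pm.
  rewrite Series_incr_1 by (apply b_series_ex; exact Hh).
  change (b 0 (S m)) with 0. rewrite Rmult_0_l, Rplus_0_l.
  rewrite <- Series_plus by (apply b_series_ex; exact Hh).
  rewrite <- Series_scal_l.
  apply Series_ext. intro N. simpl. ring.
Qed.

Lemma Pm_bound h m : 0 <= h < 1/2 -> Rabs (Pm h m) <= / (1 - 2 * h).
Proof.
  intro Hh. eapply abs_series_bound.
  - apply Series_correct, b_series_ex; exact Hh.
  - intro N. apply (b_term_bound h N m). lra.
  - apply is_series_geom. rewrite Rabs_right; lra.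
Qed.

Lemma growth (D : nat -> R) q : 2 <= q -> D 0%nat = 0 -> 0 <= D 1%nat ->
  (forall m, D (S (S m)) = q * D (S m) - D m) ->
  forall m, INR m * D 1%nat <= D m.
Proof.
  intros Hq H0 H1 Hr.
  assert (forall m, INR m * D 1%nat <= D m /\ D 1%nat <= D (S m) - D m).
  { induction m.
    - simpl. rewrite H0. lra.
    - destruct IHm as [A B]. rewrite S_INR. split; [lra|].
      rewrite Hr. assert (0 <= INR m) by apply pos_INR.
      assert (0 <= INR m * D 1%nat) by (apply Rmult_le_pos; lra).
      assert (0 <= (q - 2) * D (S m)) by (apply Rmult_le_pos; lra). nra. }
  intro m; apply H.
Qed.

Lemma bounded_growth (D : nat -> R) q C : 2 <= q -> D 0%nat = 0 ->
  (forall m, D (S (S m)) = q * D (S m) - D m) ->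
  (forall m, Rabs (D m) <= C) -> D 1%nat = 0.
Proof.
  intros Hq H0 Hr HC.
  assert (key : forall E : nat -> R, E 0%nat = 0 -> (forall m, E (S (S m)) = q * E (S m) - E m) ->
            (forall m, E m <= C) -> ~ 0 < E 1%nat).
  { intros E E0 Er EC Hpos.
    assert (G := growth E q Hq E0 ltac:(lra) Er).
    assert (L1 : is_lim_seq (fun m => INR m * E 1%nat) p_infty).
    { replace p_infty with (Rbar_mult p_infty (E 1%nat)).
      - apply is_lim_seq_scal_r. apply is_lim_seq_INR.
      - simpl. destruct (Rle_dec 0 (E 1%nat)); [|lra].
        destruct (Rle_lt_or_eq_dec 0 (E 1%nat) r); [reflexivity|lra]. }
    assert (Hle := is_lim_seq_le _ (fun _ => C) _ _ (fun m => Rle_trans _ _ _ (G m) (EC m)) L1 (is_lim_seq_const C)).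
    simpl in Hle. exact Hle. }
  destruct (Rtotal_order (D 1%nat) 0) as [Hn|[He|Hp]]; [|exact He|].
  - exfalso. apply (key (fun m => - D m)).
    + rewrite H0; ring.
    + intro m; rewrite Hr; ring.
    + intro m. specialize (HC m). apply Rabs_le_between in HC. lra.
    + lra.
  - exfalso. apply (key D H0 Hr).
    + intro m. specialize (HC m). apply Rabs_le_between in HC. lra.
    + exact Hp.
Qed.

Definition uu (s : R) : R := (1 - sqrt (1 - s ^ 2)) / s.

Lemma uu_props s : 0 < s < 1 -> 0 <= uu s <= 1 /\ uu s ^ 2 = 2 / s * uu s - 1.
Proof.
  intro Hs. unfold uu. set (r := sqrt (1 - s ^ 2)).
  assert (Hr2 : r * r = 1 - s ^ 2) by (unfold r; apply sqrt_sqrt; nra).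
  assert (Hr0 : 0 <= r) by apply sqrt_pos.
  assert (Hr1 : r <= 1) by nra.
  assert (Hrs : 1 - s <= r) by nra.
  split; [split|].
  - apply Rmult_le_pos; [lra| left; apply Rinv_0_lt_compat; lra].
  - apply Rmult_le_reg_r with s; [lra|]. unfold Rdiv. rewrite Rmult_assoc, Rinv_l; lra.
  - field_simplify_eq; [|lra]. nra.
Qed.

Lemma Pm_uu s m : 0 < s < 1 -> Pm (s / 2) m = uu s ^ m.
Proof.
  intro Hs. set (h := s / 2). assert (Hh : 0 <= h < 1/2) by (unfold h; lra).
  destruct (uu_props s Hs) as [[U0 U1] U2].
  set (D := fun m => Pm h m - uu s ^ m).
  assert (Drec : forall m, D (S (S m)) = 2 / s * D (S m) - D m).
  { intro k. unfold D. pose proof (Pm_rec h k Hh) as E.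
    assert (E' : Pm h (S (S k)) = 2 / s * Pm h (S k) - Pm h k).
    { rewrite E. unfold h. field. lra. }
    rewrite E'. replace (uu s ^ S (S k)) with (uu s ^ k * uu s ^ 2) by (simpl; ring).
    rewrite U2. simpl. ring. }
  assert (D0 : D 0%nat = 0) by (unfold D; rewrite Pm_0 by exact Hh; simpl; ring).
  assert (D1 : D 1%nat = 0).
  { apply (bounded_growth D (2 / s) (/ (1 - 2 * h) + 1)).
    - apply Rmult_le_reg_r with s; [lra|]. unfold Rdiv. rewrite Rmult_assoc, Rinv_l; lra.
    - exact D0.
    - exact Drec.
    - intro k. unfold D. unfold Rminus. eapply Rle_trans; [apply Rabs_triang|]. rewrite Rabs_Ropp.
      pose proof (Pm_bound h k Hh).
      rewrite (Rabs_right (uu s ^ k)) by (apply Rle_ge, pow_le; lra).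
      assert (uu s ^ k <= 1) by (rewrite <- (pow1 k); apply pow_incr; lra). unfold Rminus in H. lra. }
  assert (All : forall k, D k = 0 /\ D (S k) = 0).
  { induction k; [split; assumption|]. destruct IHk as [A B]. split; [exact B|].
    rewrite Drec, A, B. ring. }
  destruct (All m) as [A _]. unfold D in A. lra.
Qed.

Lemma INR_fact_S k : INR (Factorial.fact (S k)) = INR (S k) * INR (Factorial.fact k).
Proof. rewrite <- mult_INR. reflexivity. Qed.

Lemma INR_fact_pos k : 0 < INR (Factorial.fact k).
Proof. apply lt_0_INR, Factorial.lt_O_fact. Qed.

Lemma b_diag m : b m m = 1.
Proof. induction m; simpl; [reflexivity|]. rewrite IHm, b_zero_gt by lia. ring. Qed.

Lemma bK j : forall m, b (m + 1 + 2 * j) (m + 1) =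
  INR (m + 1) * INR (Factorial.fact (m + 2 * j)) /
  (INR (Factorial.fact j) * INR (Factorial.fact (m + 1 + j))).
Proof.
  induction j; intro m.
  - replace (m + 1 + 2 * 0)%nat with (m + 1)%nat by lia. rewrite b_diag.
    replace (m + 2 * 0)%nat with m by lia. replace (m + 1 + 0)%nat with (S m) by lia.
    rewrite INR_fact_S. replace (m + 1)%nat with (S m) by lia. simpl (Factorial.fact 0). simpl (INR 1).
    field. split; [apply Rgt_not_eq, INR_fact_pos|]. rewrite S_INR. pose proof (pos_INR m). lra.
  - induction m.
    + replace (0 + 1 + 2 * S j)%nat with (S (S (S (2 * j)))) by lia.
      replace (0 + 1)%nat with 1%nat by lia.
      change (b (S (S (S (2 * j)))) 1) with (b (S (S (2 * j))) 0 + b (S (S (2 * j))) 2).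
      change (b (S (S (2 * j))) 0) with 0.
      replace (S (S (2 * j))) with (1 + 1 + 2 * j)%nat by lia.
      replace 2%nat with (1 + 1)%nat at 2 by lia.
      rewrite IHj.
      replace (0 + 2 * S j)%nat with (S (S (2 * j))) by lia.
      replace (0 + 1 + S j)%nat with (S (S j)) by lia.
      replace (1 + 2 * j)%nat with (S (2 * j)) by lia.
      replace (1 + 1 + j)%nat with (S (S j)) by lia.
      rewrite !INR_fact_S, !S_INR.
      pose proof (INR_fact_pos j). pose proof (INR_fact_pos (2 * j)). pose proof (pos_INR j).
      rewrite mult_INR in *. simpl (INR 0). simpl (INR 2) in *. field. repeat split; lra.
    + replace (S m + 1 + 2 * S j)%nat with (S (m + 2 * j + 3)) by lia.
      replace (S m + 1)%nat with (S (m + 1)) by lia.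
      change (b (S (m + 2 * j + 3)) (S (m + 1))) with
        (b (m + 2 * j + 3) (m + 1) + b (m + 2 * j + 3) (S (S (m + 1)))).
      replace (m + 2 * j + 3)%nat with (m + 1 + 2 * S j)%nat at 1 by lia. rewrite IHm.
      replace (m + 2 * j + 3)%nat with (m + 2 + 1 + 2 * j)%nat by lia.
      replace (S (S (m + 1))) with (m + 2 + 1)%nat by lia. rewrite IHj.
      replace (m + 2 * S j)%nat with (m + 2 * j + 2)%nat by lia.
      replace (m + 2 + 2 * j)%nat with (m + 2 * j + 2)%nat by lia.
      replace (S m + 2 * S j)%nat with (S (m + 2 * j + 2)) by lia.
      replace (m + 1 + S j)%nat with (m + j + 2)%nat by lia.
      replace (m + 2 + 1 + j)%nat with (S (m + j + 2)) by lia.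
      replace (S (m + 1) + S j)%nat with (S (m + j + 2)) by lia.
      rewrite !INR_fact_S.
      pose proof (INR_fact_pos j). pose proof (INR_fact_pos (m + 2 * j + 2)).
      pose proof (INR_fact_pos (m + j + 2)). pose proof (pos_INR j). pose proof (pos_INR m).
      rewrite !S_INR, !plus_INR, !mult_INR. simpl (INR 2). simpl (INR 1).
      field. repeat split; lra.
Qed.

Lemma poch_shift x k : poch x (S k) = x * poch (x + 1) k.
Proof.
  induction k.
  - simpl. ring.
  - change (poch x (S (S k))) with (poch x (S k) * (x + INR (S k))).
    rewrite IHk. simpl poch. rewrite S_INR. ring.
Qed.

Lemma L1 u : forall t, (u <= t)%nat ->
  (-1) ^ u * poch (- INR t) u * INR (Factorial.fact (t - u)) = INR (Factorial.fact t).
Proof.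
  induction u; intros t Hu.
  - simpl. rewrite Nat.sub_0_r. ring.
  - assert (IH := IHu t ltac:(lia)).
    replace (t - u)%nat with (S (t - S u)) in IH by lia.
    rewrite INR_fact_S in IH.
    replace (INR (S (t - S u))) with (INR t - INR u) in IH
      by (rewrite <- minus_INR by lia; f_equal; lia).
    rewrite <- IH. simpl. ring.
Qed.

Lemma L2 t : (-1) ^ t * poch (1 / 2 - INR t) (S t) * (2 * 4 ^ t * INR (Factorial.fact t)) =
  INR (Factorial.fact (2 * t)).
Proof.
  induction t.
  - simpl. field.
  - rewrite poch_shift.
    replace (1 / 2 - INR (S t) + 1) with (1 / 2 - INR t) by (rewrite S_INR; ring).
    replace (2 * S t)%nat with (S (S (2 * t))) by lia.
    rewrite !INR_fact_S, <- IHt, !S_INR, mult_INR. simpl (INR 2).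
    rewrite <- !tech_pow_Rmult. field.
Qed.

Lemma pow_neg_even (x : R) k : (- x) ^ (2 * k + 2) = (x ^ 2) ^ (k + 1).
Proof. rewrite <- pow_mult. replace (2 * (k + 1))%nat with (2 * k + 2)%nat by lia.
  replace (2 * k + 2)%nat with (2 * (k + 1))%nat by lia. rewrite !pow_mult. f_equal. ring. Qed.

Lemma pow_neg_odd (x : R) k : (- x) ^ (2 * k + 1) = - x * (x ^ 2) ^ k.
Proof. rewrite pow_add, pow_mult. replace ((- x) ^ 2) with (x ^ 2) by ring. simpl. ring. Qed.

Lemma even_term s (n k d : nat) : 0 < INR n -> s ^ 2 = / (24 * INR n) ->
  / INR (Factorial.fact (2 * k + 2)) * (- (PI / 6)) ^ (2 * k + 2) *
    (b (2 * (k + d + 1)) (2 * k + 2) * (s / 2) ^ (2 * (k + d + 1)))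
  = ((-1) ^ (k + d + 1) / 24 ^ (k + d + 1) * poch (1 / 2 - INR (k + d + 1)) (k + d + 1 + 1)
       / INR (k + d + 1) * / INR n ^ (k + d + 1)) *
    ((-1) ^ (k + 1) * poch (- INR (k + d + 1)) (k + 1)
       / (INR (Factorial.fact (k + d + 1 + (k + 1))) * INR (Factorial.fact (2 * (k + 1) - 1)))
       * (PI ^ 2 / 36) ^ (k + 1)).
Proof.
  intros Hn Hs2.
  set (T := (k + d + 1)%nat).
  assert (HP := L2 T). assert (HQ := L1 (k + 1) T ltac:(unfold T; lia)).
  replace (T + 1)%nat with (S T) by lia.
  set (P := poch (1 / 2 - INR T) (S T)) in *.
  set (Q := poch (- INR T) (k + 1)) in *.
  replace (T - (k + 1))%nat with d in HQ by (unfold T; lia).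
  replace (2 * T)%nat with (2 * k + 1 + 1 + 2 * d)%nat by (unfold T; lia).
  replace (2 * k + 2)%nat with (2 * k + 1 + 1)%nat by lia.
  rewrite bK.
  replace (2 * k + 1 + 1 + 2 * d)%nat with (2 * (k + d + 1))%nat by lia.
  replace (2 * k + 1 + 1)%nat with (2 * k + 2)%nat by lia.
  rewrite pow_neg_even.
  replace (2 * (k + d + 1))%nat with (2 * T)%nat by reflexivity.
  rewrite pow_mult.
  replace ((s / 2) ^ 2) with (s ^ 2 / 4) by (field).
  rewrite Hs2.
  replace (T + (k + 1))%nat with (2 * k + 1 + 1 + d)%nat by (unfold T; lia).
  replace (2 * (k + 1) - 1)%nat with (2 * k + 1)%nat by lia.
  replace (S (2 * k + 1) + d)%nat with (2 * k + 1 + 1 + d)%nat by lia.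
  replace (2 * k + 1 + 2 * d)%nat with (S (2 * k + 2 * d)) by lia.
  replace (2 * T)%nat with (S (S (2 * k + 2 * d))) in HP by (unfold T; lia).
  replace (2 * k + 2)%nat with (S (2 * k + 1)) by lia.
  replace ((PI / 6) ^ 2) with (PI ^ 2 / 36) by field.
  rewrite !INR_fact_S in *.
  replace (S (2 * k + 1) + d)%nat with (2 * k + 1 + 1 + d)%nat by lia.
  assert (E1 : (-1) ^ T <> 0) by (apply pow_nonzero; lra).
  assert (E2 : (-1) ^ (k + 1) <> 0) by (apply pow_nonzero; lra).
  assert (EP : P = INR (S (S (2 * k + 2 * d))) * (INR (S (2 * k + 2 * d)) * INR (Factorial.fact (2 * k + 2 * d))) / ((-1) ^ T * (2 * 4 ^ T * INR (Factorial.fact T)))).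
  { rewrite <- HP. field. repeat split; auto; try (apply pow_nonzero; lra); try (apply Rgt_not_eq, INR_fact_pos). }
  assert (EQ : Q = INR (Factorial.fact T) / ((-1) ^ (k + 1) * INR (Factorial.fact d))).
  { rewrite <- HQ. field. repeat split; auto; try (apply pow_nonzero; lra); try (apply Rgt_not_eq, INR_fact_pos). }
  rewrite EP, EQ.
  pose proof (INR_fact_pos T). pose proof (INR_fact_pos d). pose proof (INR_fact_pos (2 * k + 1)).
  pose proof (INR_fact_pos (2 * k + 2 * d)). pose proof (INR_fact_pos (2 * k + 1 + 1 + d)).
  pose proof (pos_INR k). pose proof (pos_INR d).
  replace (/ (24 * INR n) / 4) with (/ (24 * INR n * 4)) by (field; lra).
  rewrite pow_inv, !Rpow_mult_distr.
  assert (0 < INR n ^ T) by (apply pow_lt; lra).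
  unfold T in *. rewrite !S_INR, !plus_INR, !mult_INR in *. simpl (INR 2) in *. simpl (INR 1) in *.
  field. repeat split; try lra; try (apply pow_nonzero; lra).
Qed.

Lemma odd_term s (p d : nat) :
  0 < s ->
  / INR (Factorial.fact (2 * p + 1)) * (- (PI / 6)) ^ (2 * p + 1) *
    (b (2 * (p + d) + 1) (2 * p + 1) * (s / 2) ^ (2 * (p + d) + 1))
  = (- (PI / (12 * sqrt 6)) * ((-1) ^ (p + d) * poch (1 / 2 - INR (p + d)) (p + d + 1) / 24 ^ (p + d))
       * (2 * sqrt 6 * s) ^ (2 * (p + d) + 1)) *
    ((-1) ^ p * poch (- INR (p + d)) p
       / (INR (Factorial.fact (p + d + p + 1)) * INR (Factorial.fact (2 * p)))
       * (PI ^ 2 / 36) ^ p).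
Proof.
  intros Hs.
  set (T := (p + d)%nat).
  assert (HP := L2 T). assert (HQ := L1 p T ltac:(unfold T; lia)).
  replace (T + 1)%nat with (S T) by lia.
  set (P := poch (1 / 2 - INR T) (S T)) in *.
  set (Q := poch (- INR T) p) in *.
  replace (T - p)%nat with d in HQ by (unfold T; lia).
  replace (2 * T + 1)%nat with (2 * p + 1 + 2 * d)%nat at 1 by (unfold T; lia).
  rewrite bK.
  replace (2 * p + 1 + 2 * d)%nat with (2 * T + 1)%nat by (unfold T; lia).
  replace (2 * T)%nat with (2 * p + 2 * d)%nat in HP by (unfold T; lia).
  rewrite pow_neg_odd.
  rewrite !pow_add, !pow_mult.
  replace ((PI / 6) ^ 2) with (PI ^ 2 / 36) by field.
  assert (S6 : sqrt 6 * sqrt 6 = 6) by (apply sqrt_sqrt; lra).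
  assert (S6p : 0 < sqrt 6) by (apply sqrt_lt_R0; lra).
  replace ((2 * sqrt 6 * s) ^ 2) with (24 * s ^ 2) by (simpl; rewrite !Rmult_1_r; 
     replace (2 * sqrt 6 * s * (2 * sqrt 6 * s)) with (4 * (sqrt 6 * sqrt 6) * (s * s)) by ring; rewrite S6; ring).
  replace (T + p + 1)%nat with (2 * p + 1 + d)%nat by (unfold T; lia).
  replace (2 * p + 1)%nat with (S (2 * p)) by lia.
  rewrite INR_fact_S.
  assert (E1 : (-1) ^ T <> 0) by (apply pow_nonzero; lra).
  assert (E2 : (-1) ^ p <> 0) by (apply pow_nonzero; lra).
  assert (EP : P = INR (Factorial.fact (2 * p + 2 * d)) / ((-1) ^ T * (2 * 4 ^ T * INR (Factorial.fact T)))).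
  { rewrite <- HP. field. repeat split; auto; try (apply pow_nonzero; lra); try (apply Rgt_not_eq, INR_fact_pos). }
  assert (EQ : Q = INR (Factorial.fact T) / ((-1) ^ p * INR (Factorial.fact d))).
  { rewrite <- HQ. field. repeat split; auto; try (apply pow_nonzero; lra); try (apply Rgt_not_eq, INR_fact_pos). }
  rewrite EP, EQ.
  pose proof (INR_fact_pos T). pose proof (INR_fact_pos d). pose proof (INR_fact_pos (2 * p)).
  pose proof (INR_fact_pos (2 * p + 2 * d)). pose proof (INR_fact_pos (S (2 * p) + d)).
  pose proof (pos_INR p). pose proof (pos_INR d).
  replace ((s / 2) ^ 2) with (s ^ 2 / 4) by field.
  unfold Rdiv. rewrite !Rpow_mult_distr, !pow_inv.
  replace (2 * p + 2 * d)%nat with (2 * T)%nat by (unfold T; lia).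
  rewrite !S_INR, !mult_INR in *. simpl (INR 2) in *. simpl (INR 1) in *.
  field. repeat split; try lra; try (apply pow_nonzero; lra).
Qed.

Lemma sumR_first (g : nat -> R) K : sumR g (S K) = g 0%nat + sumR (fun q => g (S q)) K.
Proof.
  induction K; [simpl; ring|].
  change (sumR g (S (S K))) with (sumR g (S K) + g (S K)). rewrite IHK.
  change (sumR (fun q => g (S q)) (S K)) with (sumR (fun q => g (S q)) K + g (S K)). ring.
Qed.

Lemma sumR_split_even (g : nat -> R) K :
  sumR g (S (2 * K)) = sumR (fun p => g (2 * p)%nat) (S K) + sumR (fun p => g (2 * p + 1)%nat) K.
Proof.
  induction K; [cbn [sumR]; simpl; ring|].
  replace (S (2 * S K)) with (S (S (S (2 * K)))) by lia.
  cbn [sumR]. cbn [sumR] in IHK. rewrite IHK.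
  replace (2 * S K)%nat with (S (S (2 * K))) by lia.
  replace (2 * K + 1)%nat with (S (2 * K)) by lia. ring.
Qed.

Lemma sumR_split_odd (g : nat -> R) K :
  sumR g (S (S (2 * K))) = sumR (fun p => g (2 * p)%nat) (S K) + sumR (fun p => g (2 * p + 1)%nat) (S K).
Proof.
  change (sumR g (S (S (2 * K)))) with (sumR g (S (2 * K)) + g (S (2 * K))).
  rewrite sumR_split_even. cbn [sumR]. replace (2 * K + 1)%nat with (S (2 * K)) by lia. ring.
Qed.

Lemma even_odd_false k : Nat.even (2 * k + 1) = false.
Proof.
  induction k; [reflexivity|].
  replace (2 * S k + 1)%nat with (S (S (2 * k + 1))) by lia. simpl. exact IHk.
Qed.

Lemma sumR_zero (g : nat -> R) K : (forall k, (k < K)%nat -> g k = 0) -> sumR g K = 0.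
Proof. intro H. rewrite (sumR_ext g (fun _ => 0)) by exact H. rewrite sumR_const. ring. Qed.

Definition ff (s : R) (m N : nat) : R :=
  / INR (Factorial.fact m) * (- (PI / 6)) ^ m * (b N m * (s / 2) ^ N).

Lemma y_even s (n t : nat) : 0 < INR n -> s ^ 2 = / (24 * INR n) ->
  sumR (fun m => ff s m (2 * t)%nat) (S (2 * t)) = e1 t * / INR n ^ t.
Proof.
  intros Hn Hs2. rewrite sumR_split_even.
  rewrite (sumR_zero (fun p => ff s (2 * p + 1) (2 * t))).
  2:{ intros k _. unfold ff. rewrite b_zero_parity; [ring|].
      replace (2 * t + (2 * k + 1))%nat with (2 * (t + k) + 1)%nat by lia. apply even_odd_false. }
  rewrite Rplus_0_r.
  destruct t as [|t'].
  - cbn [sumR]. unfold ff. simpl. field.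
  - rewrite sumR_first. unfold ff at 1.
    replace (2 * S t')%nat with (S (S (2 * t'))) at 1 by lia.
    change (b (S (S (2 * t'))) (2 * 0)) with 0. rewrite Rmult_0_l, Rmult_0_r, Rplus_0_l.
    unfold e1.
    rewrite Rmult_assoc, (Rmult_comm (sumR _ _)), <- Rmult_assoc, <- sumR_scal.
    apply sumR_ext. intros k Hk.
    assert (Hd : exists d, t' = (k + d)%nat) by (exists (t' - k)%nat; lia).
    destruct Hd as [d ->].
    replace (S (k + d)) with (k + d + 1)%nat by lia.
    unfold ff. replace (2 * S k)%nat with (2 * k + 2)%nat by lia.
    apply even_term; assumption.
Qed.

Lemma y_odd s (n t : nat) : 0 < s ->
  Rpower (INR n) (- (2 * INR t + 1) / 2) = (2 * sqrt 6 * s) ^ (2 * t + 1) ->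
  sumR (fun m => ff s m (2 * t + 1)%nat) (S (2 * t + 1)) =
  o1 t * Rpower (INR n) (- (2 * INR t + 1) / 2).
Proof.
  intros Hs HR. rewrite HR.
  replace (S (2 * t + 1)) with (S (S (2 * t))) by lia.
  rewrite sumR_split_odd.
  rewrite (sumR_zero (fun p => ff s (2 * p) (2 * t + 1))).
  2:{ intros k _. unfold ff. rewrite b_zero_parity; [ring|].
      replace (2 * t + 1 + 2 * k)%nat with (2 * (t + k) + 1)%nat by lia. apply even_odd_false. }
  rewrite Rplus_0_l.
  unfold o1.
  rewrite Rmult_assoc, (Rmult_comm (sumR _ _)), <- Rmult_assoc, <- sumR_scal.
  replace (S t) with (t + 1)%nat by lia.
  apply sumR_ext. intros p Hp.
  assert (Hd : exists d, t = (p + d)%nat) by (exists (t - p)%nat; lia).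
  destruct Hd as [d ->].
  unfold ff. apply odd_term; assumption.
Qed.

Theorem mainTheorem4 (n : nat) (hn : (1 <= n)%nat) :
  exists A B : R,
    is_series (fun t : nat => e1 t * / (INR n) ^ t) A /\
    is_series (fun t : nat => o1 t * Rpower (INR n) (- (2 * INR t + 1) / 2)) B /\
    exp (PI * sqrt (2 * INR n / 3) * (sqrt (1 - 1 / (24 * INR n)) - 1)) = A + B.
Proof.
  assert (Hn1 : 1 <= INR n) by (apply (le_INR 1); exact hn).
  assert (Hn : 0 < INR n) by lra.
  set (q := sqrt (24 * INR n)).
  assert (Hq1 : 1 < q).
  { unfold q. rewrite <- sqrt_1. apply sqrt_lt_1; lra. }
  assert (Hqq : q * q = 24 * INR n) by (unfold q; apply sqrt_sqrt; lra).
  set (s := / q).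
  assert (Hs : 0 < s < 1).
  { unfold s. split; [apply Rinv_0_lt_compat; lra|].
    rewrite <- Rinv_1. apply Rinv_lt_contravar; lra. }
  assert (Hs2 : s ^ 2 = / (24 * INR n)).
  { unfold s. rewrite <- Hqq. simpl. field. lra. }
  set (a := PI / 6).
  assert (Ha : 0 < a < 1) by (unfold a; pose proof PI_RGT_0; pose proof PI_4; lra).
  set (u := uu s).
  destruct (uu_props s Hs) as [[U0 U1] U2].
  assert (Hexp : PI * sqrt (2 * INR n / 3) * (sqrt (1 - 1 / (24 * INR n)) - 1) = - a * u).
  { assert (E1 : sqrt (2 * INR n / 3) = q / 6).
    { unfold q. replace (24 * INR n) with ((2 * INR n / 3) * (6 * 6)) by field.
      rewrite sqrt_mult by lra. rewrite sqrt_square by lra. field. }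
    assert (E2 : 1 - 1 / (24 * INR n) = 1 - s ^ 2) by (rewrite Hs2; field; lra).
    rewrite E1, E2. unfold u, uu, a, s. field. lra. }
  rewrite Hexp.
  assert (HR : forall t, Rpower (INR n) (- (2 * INR t + 1) / 2) = (2 * sqrt 6 * s) ^ (2 * t + 1)).
  { intro t.
    replace (- (2 * INR t + 1) / 2) with (- (/ 2 * INR (2 * t + 1))).
    2:{ rewrite plus_INR, mult_INR. simpl (INR 2). simpl (INR 1). field. }
    rewrite Rpower_Ropp, <- Rpower_mult, Rpower_sqrt by lra.
    rewrite Rpower_pow by (apply sqrt_lt_R0; lra).
    rewrite <- pow_inv. f_equal.
    assert (S6 : 0 < sqrt 6) by (apply sqrt_lt_R0; lra).
    assert (Sn : 0 < sqrt (INR n)) by (apply sqrt_lt_R0; lra).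
    assert (Eq : q = 2 * sqrt 6 * sqrt (INR n)).
    { unfold q. replace (24 * INR n) with ((2 * 2) * (6 * INR n)) by ring.
      rewrite sqrt_mult by nra. rewrite sqrt_square by lra. rewrite sqrt_mult by lra. ring. }
    unfold s. rewrite Eq. field. lra. }
  set (F := fun m => / INR (Factorial.fact m) * (- a * u) ^ m).
  assert (HL : is_series F (exp (- a * u))).
  { apply is_pseries_R. apply is_exp_Reals. }
  assert (Hh : 0 <= s / 2 < 1 / 2) by lra.
  assert (HF : forall m, is_series (ff s m) (F m)).
  { intro m.
    assert (H := is_series_scal_r (/ INR (Factorial.fact m) * (- a) ^ m) _ _ (Series_correct _ (b_series_ex (s / 2) m Hh))).
    apply is_series_ext with (a := fun N => b N m * (s / 2) ^ N * (/ INR (Factorial.fact m) * (- a) ^ m)).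
    - intro N. unfold ff. apply Rmult_comm.
    - replace (F m) with (Series (fun N => b N m * (s / 2) ^ N) * (/ INR (Factorial.fact m) * (- a) ^ m)); [exact H|].
      change (Series (fun N => b N m * (s / 2) ^ N)) with (Pm (s / 2) m).
      rewrite Pm_uu by exact Hs. unfold F, u. rewrite Rpow_mult_distr. ring. }
  assert (Hb : forall m N, Rabs (ff s m N) <= a ^ m * s ^ N).
  { intros m N. unfold ff. rewrite Rabs_mult, Rabs_mult.
    pose proof (INR_fact_pos m) as Hf.
    assert (Hf1 : 1 <= INR (Factorial.fact m)).
    { apply (le_INR 1). apply Factorial.lt_O_fact. }
    rewrite Rabs_inv, (Rabs_right (INR _)) by lra.
    rewrite <- RPow_abs. fold a. rewrite Rabs_Ropp, (Rabs_right a) by lra.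
    assert (Hbt := b_term_bound (s / 2) N m ltac:(lra)).
    replace (2 * (s / 2)) with s in Hbt by field.
    assert (0 <= / INR (Factorial.fact m) <= 1).
    { split; [left; apply Rinv_0_lt_compat; lra|]. rewrite <- Rinv_1. apply Rinv_le_contravar; lra. }
    assert (0 <= a ^ m) by (apply pow_le; lra).
    assert (0 <= Rabs (b N m * (s / 2) ^ N)) by apply Rabs_pos.
    replace (a ^ m * s ^ N) with (1 * a ^ m * s ^ N) by ring.
    apply Rmult_le_compat; try lra.
    - apply Rmult_le_pos; lra.
    - apply Rmult_le_compat; lra. }
  assert (Ham : forall m, a ^ m <= 1) by (intro m; rewrite <- (pow1 m); apply pow_incr; lra).
  assert (Hz : forall m N, (N < m)%nat -> ff s m N = 0).
  { intros m N H. unfold ff. rewrite b_zero_gt by exact H. ring. }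
  assert (Hb' : forall m N, Rabs (ff s m N) <= s ^ N).
  { intros m N. eapply Rle_trans; [apply Hb|]. pose proof (Ham m). pose proof (pow_le s N ltac:(lra)). nra. }
  assert (Hs' : 0 <= s < 1) by lra.
  assert (HY := fubini_tri (ff s) s F (exp (- a * u)) Hs' Hz Hb' HF HL).
  assert (Hyb : forall N, Rabs (sumR (fun m => ff s m N) (S N)) <= / (1 - a) * s ^ N).
  { intro N. eapply Rle_trans; [apply sumR_abs|].
    eapply Rle_trans; [apply (sumR_le _ (fun m => s ^ N * a ^ m)); intro m; rewrite Rmult_comm; apply Hb|].
    rewrite sumR_scal. rewrite Rmult_comm. apply Rmult_le_compat_r; [apply pow_le; lra|].
    apply sumR_pow_le; lra. }
  destruct (even_odd_split _ s (/ (1 - a)) _ ltac:(lra) ltac:(left; apply Rinv_0_lt_compat; lra) Hyb HY)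
    as [A [B [HA [HB Hsum]]]].
  exists A, B. split; [|split; [|exact Hsum]].
  - apply is_series_ext with (2 := HA). intro t. apply y_even; assumption.
  - apply is_series_ext with (2 := HB). intro t. apply y_odd; [lra| apply HR].
Qed.
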